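(* Let $G$ be a simple graph with at least one edge, with Laplacian eigenvalues $\mu_1\ge\mu_2\ge\cdots\ge\mu_n$, and (having fixed orientations of the edges and triangles of $G$) let $\eta_1\ge\eta_2\ge\cdots\ge\eta_t$ be the eigenvalues of the adjacency matrix $A(G_{\vartriangle})$ of the triangular signed graph $G_{\vartriangle}$. Then the non-zero eigenvalues of $\mathcal{H}(G)$ (with multiplicities) are exactly all $\mu_i$ with $\mu_i\ne 0$ together with all $3+\eta_j$ with $\eta_j\ne -3$. In particular, the largest eigenvalue of $\mathcal{H}(G)$ is $\max\{\mu_1,3+\eta_1\}$ (the term $3+\eta_1$ being absent when $G$ has no triangles).
   Context: $L(G)=D(G)-A(G)$ is the Laplacian matrix. For an oriented edge $e$ write $e^-$ for its tail and $e^+$ for its head. For distinct edges $e,e'$: $e\leftrightarrow e'$ means $e^+=e'^-$ or $e'^+=e^-$; $e\overset{\pm}{\sim}e'$ means $e^+=e'^+$ or $e^-=e'^-$; $e\vartriangle e'$ means $e,e'$ are two edges of a common triangle. $\triangle(e)$ is the number of triangles containing $e$. The Helmholtzian matrix $\mathcal{H}(G)=(h_{ee'})$ is indexed by edges, with $h_{ee}=\triangle(e)+2$, and for $e\ne e'$: $h_{ee'}=-1$ if $e\leftrightarrow e'$ and not $e\vartriangle e'$; $h_{ee'}=1$ if $e\overset{\pm}{\sim}e'$ and not $e\vartriangle e'$; $h_{ee'}=0$ otherwise. Each triangle $\vartriangle$ is given a cyclic orientation; for an edge $e$ of $\vartriangle$ write $e\in\vartriangle^+$ if the orientation of $e$ agrees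 with that of $\vartriangle$ and $e\in\vartriangle^-$ otherwise. The triangular signed graph $G_{\vartriangle}$ has the $t$ triangles of $G$ as vertices; two distinct triangles $\vartriangle_1,\vartriangle_2$ sharing an edge $e$ are joined by a positive edge if $e\in\vartriangle_1^+\cap\vartriangle_2^+$ or $e\in\vartriangle_1^-\cap\vartriangle_2^-$, and by a negative edge otherwise; triangles sharing no edge are non-adjacent. $A(G_{\vartriangle})$ has entry $\pm1$ for positive/negative edges and $0$ elsewhere. *)

(* Defs.v *)
From HB Require Import structures.
From mathcomp Require Import all_boot all_order all_algebra.
Set Implicit Arguments. Unset Strict Implicit. Unset Printing Implicit Defensive.
Import Order.TTheory GRing.Theory Num.Theory.
Local Open Scope ring_scope.

(* Triangles are indexed by 'I_t;
   [tri i = (a,b,c)] is triangle {a,b,c} with cyclic orientation a->b->c->a. *)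

Section Graph.
Variables (n m t : nat) (tl hd : 'I_m -> 'I_n).
Variable tri : 'I_t -> 'I_n * 'I_n * 'I_n.

Definition adjv (u v : 'I_n) : bool :=
  [exists e, ((tl e == u) && (hd e == v)) || ((tl e == v) && (hd e == u))].

Definition simple_oriented : Prop :=
  (forall e, tl e != hd e) /\
  (forall e e', [set tl e; hd e] = [set tl e'; hd e'] -> e = e').

Definition tri_vs (i : 'I_t) : {set 'I_n} :=
  let: (a, b, c) := tri i in [set a; b; c].

Definition oriented_triangles : Prop :=
  (forall i, let: (a, b, c) := tri i in
     [&& a != b, b != c, a != c, adjv a b, adjv b c & adjv a c]) /\
  (forall i j, tri_vs i = tri_vs j -> i = j) /\
  (forall a b c, adjv a b -> adjv b c -> adjv a c ->
     exists i, tri_vs i = [set a; b; c]).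

Definition in_tri (i : 'I_t) (e : 'I_m) : bool :=
  (tl e \in tri_vs i) && (hd e \in tri_vs i).

Definition tri_pos (i : 'I_t) (e : 'I_m) : bool :=
  let: (a, b, c) := tri i in
  [|| (tl e, hd e) == (a, b), (tl e, hd e) == (b, c) | (tl e, hd e) == (c, a)].

Definition tri_neg (i : 'I_t) (e : 'I_m) : bool := in_tri i e && ~~ tri_pos i e.

Variable R : numDomainType.

Definition adj_mx : 'M[R]_n := \matrix_(u, v) (if adjv u v then 1 else 0).
Definition deg_mx : 'M[R]_n :=
  \matrix_(u, v) (if u == v then (#|[set w | adjv u w]|)%:R else 0).
Definition laplacian : 'M[R]_n := deg_mx - adj_mx.

Definition ntri (e : 'I_m) : nat := #|[set i | in_tri i e]|.

Definition head_tail (e e' : 'I_m) : bool := (hd e == tl e') || (hd e' == tl e).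
Definition same_end (e e' : 'I_m) : bool := (hd e == hd e') || (tl e == tl e').
Definition co_tri (e e' : 'I_m) : bool := [exists i, in_tri i e && in_tri i e'].

Definition helmholtzian : 'M[R]_m :=
  \matrix_(e, e')
    (if e == e' then (ntri e + 2)%:R
     else if head_tail e e' && ~~ co_tri e e' then -1
     else if same_end e e' && ~~ co_tri e e' then 1
     else 0).

Definition tri_adj_mx : 'M[R]_t :=
  \matrix_(i, j)
    (if (i != j) && [exists e, in_tri i e && in_tri j e] then
       (if [exists e, in_tri i e && in_tri j e &&
                      ((tri_pos i e && tri_pos j e) || (tri_neg i e && tri_neg j e))]
        then 1 else -1)
     else 0).

End Graph.

Definition is_max_eig (R : numFieldType) (k : nat) (M : 'M[R]_k) (x : R) : Prop :=
  eigenvalue M x /\ (forall y, eigenvalue M y -> y <= x).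

(* Main.v *)
Require Import Defs.
From HB Require Import structures.
From mathcomp Require Import all_boot all_order all_algebra.
From mathcomp Require Import ring lra.
From mathcomp Require Import complex.
Import Order.TTheory GRing.Theory Num.Theory.
Local Open Scope ring_scope.

Lemma sylvester_char (R : comNzRingType) p q (A : 'M[R]_(p,q)) (B : 'M[R]_(q,p)) :
  'X^q * char_poly (A *m B) = 'X^p * char_poly (B *m A).
Proof.
rewrite /char_poly /char_poly_mx !map_mxM.
set A' := map_mx polyC A; set B' := map_mx polyC B.
set M1 := block_mx ('X%:M : 'M_p) A' B' (1%:M : 'M_q).
have h1 : M1 *m block_mx 1%:M 0 (-B') 1%:M = block_mx ('X%:M - A' *m B') A' 0 1%:M.
  by rewrite mulmx_block !mulmx0 !mulmx1 !mul1mx !add0r mulmxN subrr.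
have h2 : block_mx 1%:M 0 (-B') ('X%:M) *m M1 = block_mx ('X%:M) A' 0 ('X%:M - B' *m A').
  rewrite mulmx_block !mul0mx !mul1mx !addr0 !mulNmx mul_mx_scalar mul_scalar_mx.
  by rewrite addNr mulmx1 addrC.
have e1 : \det M1 = \det ('X%:M - A' *m B').
  by have := congr1 determinant h1; rewrite det_mulmx det_lblock det_ublock !det1 !mulr1.
have := congr1 determinant h2; rewrite det_mulmx det_lblock det_ublock det1 mul1r !det_scalar e1.
by rewrite mulrC => ->.
Qed.

Lemma char_poly_mulP (R : comNzRingType) k (P Q : 'M[R]_k) : P *m Q = 0 ->
  char_poly P * char_poly Q = 'X^k * char_poly (P + Q).
Proof.
move=> PQ; rewrite /char_poly -det_mulmx -detZ; congr determinant.
rewrite /char_poly_mx mulmxBl !mulmxBr -map_mxM PQ map_mx0 subr0.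
rewrite mul_mx_scalar mul_scalar_mx mul_mx_scalar map_mxD scalerBr scalerDr opprD addrA.
by rewrite addrAC.
Qed.

Lemma char_poly_shift (R : comNzRingType) k (c : R) (A : 'M[R]_k) :
  char_poly (c%:M + A) = char_poly A \Po ('X - c%:P).
Proof.
rewrite /char_poly -[X in _ = X](det_map_mx (comp_poly ('X - c%:P))).
congr determinant; apply/matrixP => i j; rewrite !mxE.
rewrite /= raddfB /= raddfMn /= comp_polyC comp_polyX.
by case: (i == j) => /=; rewrite ?mulr1n ?mulr0n ?add0r ?polyCD ?opprD ?addrA // sub0r.
Qed.

Lemma mup_comp (F : fieldType) (p : {poly F}) (a c : F) : p != 0 ->
  mup a (p \Po ('X - c%:P)) = mup (a - c) p.
Proof.
move=> p0.
have s2 : size ('X - c%:P) = 2 by rewrite size_XsubC.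
have pc0 : p \Po ('X - c%:P) != 0 by rewrite comp_poly2_eq0.
have key : forall k, (k <= mup a (p \Po ('X - c%:P)))%N = (k <= mup (a - c) p)%N.
  move=> k; rewrite !mup_geq //.
  have eX : ('X - (a - c)%:P) ^+ k \Po ('X - c%:P) = ('X - a%:P) ^+ k.
    rewrite rmorphXn /= comp_polyB comp_polyX comp_polyC.
    by congr (_ ^+ _); rewrite polyCB opprB addrA subrK.
  apply/idP/idP.
  - move=> /dvdpP [r hr].
    have := congr1 (comp_poly ('X + c%:P)) hr.
    rewrite -comp_polyA comp_polyB comp_polyX comp_polyC addrK comp_polyXr => ->.
    rewrite comp_polyM; apply: dvdp_mull.
    rewrite rmorphXn /= comp_polyB comp_polyX comp_polyC.
    by rewrite polyCB opprB addrA.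
  - move=> /dvdpP [r hr]; rewrite hr comp_polyM -eX; exact: dvdp_mull.
apply/eqP; rewrite eqn_leq key leqnn /= -key leqnn //.
Qed.

Lemma sym_eig_real (R : rcfType) k (S : 'M[R]_k) (z : R[i]) : S^T = S ->
  eigenvalue (map_mx (real_complex R) S) z -> complex.Im z = 0.
Proof.
move=> Ssym /eigenvalueP [v hv v0].
set cj := (@conjc R : {rmorphism R[i] -> R[i]}).
have hj : forall j, \sum_i v 0 i * (S i j)%:C%C = z * v 0 j.
  move=> j; have := congr1 (fun M : 'M[R[i]]_(1,k) => M 0 j) hv; rewrite /= !mxE => <-.
  by apply: eq_bigr => i _; rewrite !mxE.
set q := \sum_j v 0 j * cj (v 0 j).
have q0 : q != 0.
  apply/negP => /eqP hq; move/negP: v0; apply; apply/eqP/rowP => j; rewrite mxE.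
  have := @psumr_eq0P _ _ predT (fun j => v 0 j * cj (v 0 j)) (fun j _ => mulcJ_ge0 (v 0 j)) hq j isT.
  by move/eqP; rewrite mulf_eq0 /cj /= conjc_eq0 orbb => /eqP.
have e1 : \sum_j (\sum_i v 0 i * (S i j)%:C%C) * cj (v 0 j) = z * q.
  by rewrite mulr_sumr; apply: eq_bigr => j _; rewrite hj mulrA.
have e2 : \sum_j (\sum_i v 0 i * (S i j)%:C%C) * cj (v 0 j) = cj z * q.
  rewrite (eq_bigr (fun j => \sum_i v 0 i * (S i j)%:C%C * cj (v 0 j))); last first.
    by move=> j _; rewrite mulr_suml.
  rewrite exchange_big /= mulr_sumr; apply: eq_bigr => i _.
  have : cj (\sum_j v 0 j * (S j i)%:C%C) = cj (z * v 0 i) by rewrite hj.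
  rewrite rmorph_sum rmorphM /= => h.
  rewrite mulrCA -h mulr_sumr; apply: eq_bigr => j _.
  rewrite rmorphM /= oppr0 complexr0.
  have -> : S j i = S i j by rewrite -{1}Ssym mxE.
  by rewrite -!mulrA [_ * (S i j)%:C%C]mulrC.
have : z = cj z.
  by apply: (mulIf q0); rewrite -e1 -e2.
move=> hz; clear -hz; case: z hz => a b /= [] /eqP ?; lra.
Qed.

Lemma sym_pos_eig (R : rcfType) k (S : 'M[R]_k) : S^T = S -> 0 < \tr S ->
  exists r, 0 < r /\ eigenvalue S r.
Proof.
move=> Ssym trp.
have k0 : (0 < k)%N by case: k S trp {Ssym} => // S; rewrite /mxtrace big_ord0 ltxx.
set f := (real_complex R : {rmorphism R -> R[i]}).
set S' := map_mx f S.
have [rs hrs] := closed_field_poly_normal (char_poly S').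
move: hrs; rewrite (monicP (char_poly_monic S')) scale1r => hrs.
have szrs : size rs = k.
  have := size_char_poly S'; rewrite hrs size_prod_XsubC; by case.
have hsum : \sum_(z <- rs) z = f (\tr S).
  have := char_poly_trace S' k0; rewrite {1}hrs.
  have := @coefPn_prod_XsubC _ rs; rewrite szrs -lt0n k0 => -> // /eqP; rewrite eqr_opp => /eqP ->.
  by rewrite /mxtrace rmorph_sum; apply: eq_bigr => i _; rewrite mxE.
have hroot : forall z, z \in rs -> eigenvalue S' z.
  by move=> z zin; rewrite eigenvalue_root_char hrs root_prod_XsubC.
have [z zin zpos] : exists2 z, z \in rs & 0 < complex.Re z.
  have reD : forall s : seq R[i], complex.Re (\sum_(z <- s) z) = \sum_(z <- s) complex.Re z.
    elim=> [|a s IH]; first by rewrite !big_nil.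
    rewrite !big_cons -IH; case: a => a1 a2; by case: (\sum_(z <- s) z).
  case: (boolP (has (fun z => 0 < complex.Re z) rs)) => [/hasP [z zin zp]|hn].
    by exists z.
  exfalso; move: trp; apply/negP; rewrite -leNgt.
  have -> : \tr S = complex.Re (f (\tr S)) by [].
  rewrite -hsum reD big_seq; apply: sumr_le0 => z zin.
  rewrite leNgt; apply/negP => zp; move/hasPn: hn => /(_ z zin); by rewrite zp.
exists (complex.Re z); split => //.
have zr : z = f (complex.Re z).
  have := @sym_eig_real R k S z Ssym (hroot z zin); case: z {zin zpos} => a b /= ->.
  by [].
rewrite eigenvalue_root_char -(fmorph_root f) map_char_poly -zr -eigenvalue_root_char.
exact: hroot.
Qed.

Lemma mupXk (F : fieldType) (p : {poly F}) (a : F) k : a != 0 -> p != 0 ->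
  mup a ('X^k * p) = mup a p.
Proof.
move=> a0 p0; have Xk0 : ('X^k : {poly F}) != 0 by rewrite monic_neq0 ?monicXn.
rewrite mupM //.
have -> : ('X^k : {poly F}) = ('X - 0%:P) ^+ k by rewrite subr0.
by rewrite mup_XsubCX eq_sym (negbTE a0).
Qed.

Lemma root_mup (F : fieldType) (p : {poly F}) (a : F) : p != 0 ->
  root p a = (0 < mup a p)%N.
Proof. by move=> p0; rewrite -XsubC_dvd // dvdp_XsubCl. Qed.

Lemma eig0 (F : fieldType) k (A : 'M[F]_k) a : k = 0%N -> ~~ eigenvalue A a.
Proof.
move=> k0; apply/negP => /eigenvalueP [v _ /eqP []]; apply/rowP => -[j lt].
by exfalso; move: lt; rewrite k0.
Qed.
Set Implicit Arguments. Unset Strict Implicit.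

Ltac bash_step :=
  match goal with
  | H : is_true (?u != ?u) |- _ => by rewrite eqxx in H
  | H : ~ (?u = ?u /\ ?v = ?v) |- _ => by exfalso; apply: H
  | |- context [?u == ?u] => rewrite eqxx
  | H : is_true (?u != ?v) |- context [?u == ?v] => rewrite (negbTE H)
  | H : is_true (?u != ?v) |- context [?v == ?u] => rewrite [v == u]eq_sym (negbTE H)
  | |- context [?u == ?v] => case: (eqVneq u v) => [?|?]; subst
  end.
Ltac bash := rewrite ?xpair_eqE ?inE /=; repeat (bash_step; rewrite /=); rewrite ?(addr0, add0r, subr0, sub0r, mulr0, mul0r, mulr1, mul1r, mulrNN, mulN1r, mulrN1); try done; try (by ring).

Lemma card_ge3 (n : nat) (x y x' y' : 'I_n) : x != y -> x' != y' -> ~ (x = x' /\ y = y') -> ~ (x = y' /\ y = x') ->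
  (3 <= #|[set x; y; x'; y']|)%N.
Proof.
move=> h1 h2 h3 h4.
have [z [zS [zx zy]]] : exists z, z \in [set x'; y'] /\ z != x /\ z != y.
  case: (boolP ((x' != x) && (x' != y))) => [/andP[g1 g2] | g].
    by exists x'; rewrite !inE eqxx g1 g2.
  by exists y'; rewrite !inE eqxx; move: g; bash.
have -> : 3%N = #|[set x; y; z]| by rewrite setUC cardsU1 cards2 !inE; bash.
apply: subset_leq_card; apply/subsetP => u; rewrite !inE in zS *.
by case/orP: zS => /eqP -> ; move=> /orP[/orP[]|] /eqP ->; rewrite eqxx ?orbT.
Qed.

Section Comb.
Variables (n m t : nat) (tl hd : 'I_m -> 'I_n).
Variable tri : 'I_t -> 'I_n * 'I_n * 'I_n.
Hypothesis Hs : simple_oriented tl hd.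
Hypothesis Ht : oriented_triangles tl hd tri.
Variable R : rcfType.

Definition E (x y : 'I_n) (e : 'I_m) : bool := (tl e == x) && (hd e == y).

Lemma tlhd e : tl e != hd e.
Proof. exact: Hs.1. Qed.

Lemma edge_eq e e' : tl e = tl e' -> hd e = hd e' -> e = e'.
Proof. by move=> h1 h2; apply: Hs.2; rewrite h1 h2. Qed.

Lemma edge_eq2 e e' : tl e = hd e' -> hd e = tl e' -> e = e'.
Proof. by move=> h1 h2; apply: Hs.2; rewrite h1 h2 setUC. Qed.

Lemma cnt x y : \sum_e ((E x y e)%:R + (E y x e)%:R : R) = (adjv tl hd x y)%:R.
Proof.
case: (boolP (adjv tl hd x y)) => [/existsP [e0 h0] | /existsPn h].
  have xy : x != y.
    by case/orP: h0 => /andP [/eqP <- /eqP <-]; rewrite ?tlhd // eq_sym tlhd.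
  rewrite (bigD1 e0) //= big1.
    rewrite /E; case/orP: h0 => /andP [/eqP -> /eqP ->]; bash.
  move=> e ne; rewrite /E.
  have h1 : ~~ ((tl e == x) && (hd e == y)).
    apply/negP => /andP [/eqP ex /eqP ey]; move/eqP: ne; apply.
    by case/orP: h0 => /andP [/eqP ex0 /eqP ey0]; [apply: edge_eq | apply: edge_eq2]; congruence.
  have h2 : ~~ ((tl e == y) && (hd e == x)).
    apply/negP => /andP [/eqP ex /eqP ey]; move/eqP: ne; apply.
    by case/orP: h0 => /andP [/eqP ex0 /eqP ey0]; [apply: edge_eq2 | apply: edge_eq]; congruence.
  by rewrite (negbTE h1) (negbTE h2) addr0.
rewrite big1 // => e _; have := h e; rewrite negb_or => /andP [h1 h2].
by rewrite /E (negbTE h1) (negbTE h2) addr0.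
Qed.


Definition f (v : 'I_n) (e : 'I_m) : R := (v == hd e)%:R - (v == tl e)%:R.
Definition B1 : 'M[R]_(n,m) := \matrix_(v,e) f v e.

Lemma sum_ind2 (x y : 'I_n) : \sum_(v : 'I_n) ((v == x)%:R * (v == y)%:R : R) = (x == y)%:R.
Proof.
rewrite (bigD1 x) //= big1 => [|v /negbTE -> ]; last by rewrite mul0r.
by rewrite eqxx mul1r addr0.
Qed.

Lemma B1tB1 e e' : (B1^T *m B1) e e' =
  (hd e == hd e')%:R + (tl e == tl e')%:R - (hd e == tl e')%:R - (tl e == hd e')%:R.
Proof.
rewrite mxE.
transitivity (\sum_(v : 'I_n) ((v==hd e)%:R*(v==hd e')%:R + (v==tl e)%:R*(v==tl e')%:R
   - (v==hd e)%:R*(v==tl e')%:R - (v==tl e)%:R*(v==hd e')%:R : R)).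
  by apply: eq_bigr => v _; rewrite !mxE /f; ring.
by rewrite !sumrB big_split /= !sum_ind2.
Qed.

Lemma pw_sq (u x y : 'I_n) : x != y ->
  (((u == y)%:R - (u == x)%:R) * ((u == y)%:R - (u == x)%:R) : R) = (x == u)%:R + (y == u)%:R.
Proof. move=> *; bash. Qed.

Lemma pw_off (u v x y : 'I_n) : x != y -> u != v ->
  (((u == y)%:R - (u == x)%:R) * ((v == y)%:R - (v == x)%:R) : R) =
  - ((((x == u) && (y == v))%:R : R) + ((x == v) && (y == u))%:R).
Proof. move=> *; bash. Qed.

Lemma sumE1 e u : \sum_w ((E u w e)%:R : R) = (tl e == u)%:R.
Proof.
rewrite (bigD1 (hd e)) //= big1 => [|w hw]; first by rewrite /E eqxx andbT addr0.
by rewrite /E [hd e == w]eq_sym (negbTE hw) andbF.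
Qed.

Lemma sumE2 e u : \sum_w ((E w u e)%:R : R) = (hd e == u)%:R.
Proof.
rewrite (bigD1 (tl e)) //= big1 => [|w hw]; first by rewrite /E eqxx addr0.
by rewrite /E [tl e == w]eq_sym (negbTE hw).
Qed.

Lemma adjv_irr u : ~~ adjv tl hd u u.
Proof.
apply/existsP => -[e]; rewrite orbb => /andP [/eqP h1 /eqP h2].
by move: (tlhd e); rewrite h1 h2 eqxx.
Qed.

Lemma B1B1t u v : (B1 *m B1^T) u v = laplacian tl hd R u v.
Proof.
rewrite mxE /laplacian !mxE.
under eq_bigr => e _ do rewrite !mxE /f.
case: (eqVneq u v) => [<-|uv].
  under eq_bigr => e _ do rewrite pw_sq ?tlhd //.
  rewrite (negbTE (adjv_irr u)) subr0.
  have -> : #|[set w | adjv tl hd u w]| = (\sum_w (adjv tl hd u w : nat))%N.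
    by rewrite -sum1_card big_mkcond /=; apply: eq_bigr => w _; rewrite inE; case: adjv.
  rewrite natr_sum.
  under [RHS]eq_bigr => w _ do rewrite -cnt.
  rewrite exchange_big /=; apply: eq_bigr => e _.
  by rewrite big_split /= sumE1 sumE2.
under eq_bigr => e _ do rewrite pw_off ?tlhd //.
rewrite sumrN (eq_bigr (fun e => (E u v e)%:R + (E v u e)%:R)); last by [].
rewrite cnt sub0r; by case: adjv.
Qed.


Lemma offdiag_pure (x y x' y' : 'I_n) : x != y -> x' != y' -> ~ (x = x' /\ y = y') -> ~ (x = y' /\ y = x') ->
  ((y == y')%:R + (x == x')%:R - (y == x')%:R - (x == y')%:R : R) =
  if (y == x') || (y' == x) then -1 else if (y == y') || (x == x') then 1 else 0.
Proof. move=> *; bash. Qed.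

Definition sgf (a b c x y : 'I_n) : R :=
  if (x \in [set a; b; c]) && (y \in [set a; b; c]) then
    (if [|| (x, y) == (a, b), (x, y) == (b, c) | (x, y) == (c, a)] then 1 else -1)
  else 0.

Definition Ex (x y p q : 'I_n) : R := ((x == p) && (y == q))%:R.

Lemma sgf_sq (a b c x y : 'I_n) : a != b -> b != c -> a != c -> x != y ->
  sgf a b c x y * sgf a b c x y =
  (Ex x y a b + Ex x y b a) + (Ex x y b c + Ex x y c b) + (Ex x y a c + Ex x y c a).
Proof. move=> *; rewrite /sgf /Ex; bash. Qed.

Lemma sgf_bd (v a b c x y : 'I_n) : a != b -> b != c -> a != c -> x != y ->
  ((v == y)%:R - (v == x)%:R) * sgf a b c x y =
  ((v == b)%:R - (v == a)%:R) * (Ex x y a b + Ex x y b a) +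
  ((v == c)%:R - (v == b)%:R) * (Ex x y b c + Ex x y c b) +
  ((v == a)%:R - (v == c)%:R) * (Ex x y a c + Ex x y c a).
Proof. move=> *; rewrite /sgf /Ex; bash. Qed.

Lemma cotri_pure (a b c x y x' y' : 'I_n) : a != b -> b != c -> a != c ->
  x != y -> x' != y' -> ~ (x = x' /\ y = y') -> ~ (x = y' /\ y = x') ->
  x \in [set a; b; c] -> y \in [set a; b; c] -> x' \in [set a; b; c] -> y' \in [set a; b; c] ->
  0 = (y == y')%:R + (x == x')%:R - (y == x')%:R - (x == y')%:R + sgf a b c x y * sgf a b c x' y'.
Proof.
move=> ab bc ac xy xy' n1 n2 hx hy hx' hy'; rewrite !inE in hx hy hx' hy'.
move: hx => /orP[/orP[]|] /eqP ?; subst; move: hy => /orP[/orP[]|] /eqP ?; subst;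
move: hx' => /orP[/orP[]|] /eqP ?; subst; move: hy' => /orP[/orP[]|] /eqP ?; subst; rewrite /sgf; bash.
Qed.


Definition sg (i : 'I_t) (e : 'I_m) : R :=
  if in_tri tl hd tri i e then (if tri_pos tl hd tri i e then 1 else -1) else 0.
Definition B2 : 'M[R]_(m,t) := \matrix_(e,i) sg i e.

Lemma tri_info i : exists a b c, tri i = (a, b, c) /\
  [/\ a != b, b != c, a != c & [/\ adjv tl hd a b, adjv tl hd b c & adjv tl hd a c]].
Proof.
have := Ht.1 i; case: (tri i) => [[a b] c] /and5P [h1 h2 h3 h4 /andP [h5 h6]].
by exists a, b, c; split.
Qed.

Lemma sg_tri i a b c e : tri i = (a, b, c) -> sg i e = sgf a b c (tl e) (hd e).
Proof. by move=> h; rewrite /sg /sgf /in_tri /tri_pos /tri_vs h. Qed.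

Lemma in_tri_tri i a b c e : tri i = (a, b, c) ->
  in_tri tl hd tri i e = (tl e \in [set a; b; c]) && (hd e \in [set a; b; c]).
Proof. by move=> h; rewrite /in_tri /tri_vs h. Qed.

Lemma sg0 i e : ~~ in_tri tl hd tri i e -> sg i e = 0.
Proof. by rewrite /sg => /negbTE ->. Qed.

Lemma tri_vs_eq k e e' : e != e' -> in_tri tl hd tri k e -> in_tri tl hd tri k e' ->
  tri_vs tri k = [set tl e; hd e; tl e'; hd e'].
Proof.
move=> ne h1 h2; apply/eqP; rewrite eq_sym eqEcard; apply/andP; split.
  move: h1 h2; rewrite /in_tri => /andP [g1 g2] /andP [g3 g4].
  apply/subsetP => u; rewrite !inE => /orP [/orP [/orP []|]|] /eqP ->; by [].
apply: (@leq_trans 3); last apply: (@card_ge3 _ _ _ _ _ (tlhd e) (tlhd e')).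
- rewrite /tri_vs; case: (tri k) => [[a b] c].
  by rewrite setUC cardsU1 cards2; case: (_ \notin _); case: (_ != _).
- by case => g1 g2; move/eqP: ne; apply; apply: edge_eq.
- by case => g1 g2; move/eqP: ne; apply; apply: edge_eq2.
Qed.

Lemma tri_uniq i j e e' : e != e' -> in_tri tl hd tri i e -> in_tri tl hd tri i e' ->
  in_tri tl hd tri j e -> in_tri tl hd tri j e' -> i = j.
Proof.
move=> ne h1 h2 h3 h4; apply: Ht.2.1.
by rewrite (tri_vs_eq ne h1 h2) (tri_vs_eq ne h3 h4).
Qed.


Lemma sg_sq i e : sg i e * sg i e = (in_tri tl hd tri i e)%:R.
Proof. by rewrite /sg; case: (in_tri tl hd tri i e); case: (tri_pos tl hd tri i e); rewrite /= ?mulr1 ?mulrNN ?mulr1 ?mulr0. Qed.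

Lemma helmE : helmholtzian tl hd tri R = B1^T *m B1 + B2 *m B2^T.
Proof.
apply/matrixP => e e'; rewrite [RHS]mxE B1tB1 mxE /helmholtzian mxE.
under [X in _ = _ + X]eq_bigr => i _ do rewrite !mxE.
case: (eqVneq e e') => [<-|ne].
  under eq_bigr => i _ do rewrite sg_sq.
  rewrite !eqxx [hd e == tl e]eq_sym (negbTE (tlhd e)).
  have -> : ntri tl hd tri e = (\sum_i (in_tri tl hd tri i e : nat))%N.
    by rewrite /ntri -sum1_card big_mkcond /=; apply: eq_bigr => i _; rewrite inE; case: in_tri.
  rewrite natrD natr_sum addrC; congr (_ + _); rewrite /=; lra.
have ne1 : ~ (tl e = tl e' /\ hd e = hd e').
  by case=> g1 g2; move/eqP: ne; apply; apply: edge_eq.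
have ne2 : ~ (tl e = hd e' /\ hd e = tl e').
  by case=> g1 g2; move/eqP: ne; apply; apply: edge_eq2.
case: (boolP (co_tri tl hd tri e e')) => [/existsP [i0 /andP [h1 h2]] | nco].
  rewrite (bigD1 i0) //= big1 => [|i ni]; last first.
    case: (boolP (in_tri tl hd tri i e && in_tri tl hd tri i e')) => [/andP [g1 g2]|].
      by move/eqP: ni; case; apply: (tri_uniq ne).
    by case/nandP => g; rewrite (sg0 g) ?mul0r ?mulr0.
  rewrite addr0 !andbF.
  have [a [b [c [tE [ab bc ac _]]]]] := tri_info i0.
  rewrite !(sg_tri _ tE).
  move: h1 h2; rewrite !(in_tri_tri _ tE) => /andP [g1 g2] /andP [g3 g4].
  exact: cotri_pure (tlhd e) (tlhd e') ne1 ne2 g1 g2 g3 g4.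
rewrite big1 => [|i _]; last first.
  case: (boolP (in_tri tl hd tri i e)) => g1; last by rewrite sg0 ?mul0r.
  case: (boolP (in_tri tl hd tri i e')) => g2; last by rewrite (sg0 g2) mulr0.
  by move/existsP: nco; case; exists i; rewrite g1 g2.
rewrite addr0 !andbT.
by rewrite (offdiag_pure (tlhd e) (tlhd e') ne1 ne2).
Qed.


Lemma B2tB2 : B2^T *m B2 = (3 : R)%:M + tri_adj_mx tl hd tri R.
Proof.
apply/matrixP => i j; rewrite !mxE.
under eq_bigr => e _ do rewrite !mxE.
case: (eqVneq i j) => [<-|ij].
  rewrite /= mulr1n addr0.
  have [a [b [c [tE [ab bc ac [hab hbc hac]]]]]] := tri_info i.
  under eq_bigr => e _ do rewrite (sg_tri _ tE) sgf_sq ?tlhd //.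
  rewrite !big_split /=.
  have cE : forall x y, \sum_e Ex (tl e) (hd e) x y + \sum_e Ex (tl e) (hd e) y x =
     (adjv tl hd x y)%:R.
    by move=> x y; rewrite -big_split /= -cnt.
  rewrite !cE hab hbc hac /=; lra.
rewrite /= mulr0n add0r.
case: (boolP [exists e, in_tri tl hd tri i e && in_tri tl hd tri j e]) => [|nsh]; last first.
  rewrite big1 // => e _.
  case: (boolP (in_tri tl hd tri i e)) => g1; last by rewrite (sg0 g1) mul0r.
  case: (boolP (in_tri tl hd tri j e)) => g2; last by rewrite (sg0 g2) mulr0.
  by move/existsP: nsh; case; exists e; rewrite g1 g2.
move=> /[dup] hex /existsP [e0 /andP [h1 h2]].
rewrite (bigD1 e0) //= big1 => [|e ne]; last first.
  case: (boolP (in_tri tl hd tri i e && in_tri tl hd tri j e)) => [/andP [g1 g2]|].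
    by move/eqP: ij; case; apply: (tri_uniq ne).
  by case/nandP => g; rewrite (sg0 g) ?mul0r ?mulr0.
rewrite addr0 /sg h1 h2.
case: (boolP [exists e, _]) => [/existsP [e1 /andP [/andP [g1 g2] g3]] | nex].
  have e10 : e1 = e0.
    case: (eqVneq e1 e0) => // ne; exfalso; move/eqP: ij; apply.
    exact: (tri_uniq ne g1 h1 g2 h2).
  move: g3; rewrite e10 /tri_neg h1 h2 /=.
  by case: (tri_pos tl hd tri i e0) => /=; case: (tri_pos tl hd tri j e0) => //= _; rewrite ?mulrNN ?mulr1.
move/existsPn: nex => /(_ e0); rewrite h1 h2 /tri_neg h1 h2 /=.
by case: (tri_pos tl hd tri i e0) => /=; case: (tri_pos tl hd tri j e0) => //= _; rewrite ?mulr1 ?mulN1r ?mulrN1.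
Qed.

Lemma B1B2 : B1 *m B2 = 0.
Proof.
apply/matrixP => v i; rewrite !mxE.
have [a [b [c [tE [ab bc ac [hab hbc hac]]]]]] := tri_info i.
under eq_bigr => e _ do rewrite !mxE /f (sg_tri _ tE) sgf_bd ?tlhd //.
rewrite !big_split /= -!mulr_sumr.
have cE : forall x y, \sum_e (Ex (tl e) (hd e) x y + Ex (tl e) (hd e) y x) =
   (adjv tl hd x y)%:R.
  by move=> x y; rewrite -cnt.
rewrite !cE hab hbc hac /=; ring.
Qed.


Lemma mainthm : (0 < m)%N ->
  (forall a : R, a != 0 ->
     mup a (char_poly (helmholtzian tl hd tri R)) =
       (mup a (char_poly (laplacian tl hd R)) +
        mup (a - 3) (char_poly (tri_adj_mx tl hd tri R)))%N) /\
  (forall mu1 eta1 : R,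
     is_max_eig (laplacian tl hd R) mu1 ->
     ((0 < t)%N -> is_max_eig (tri_adj_mx tl hd tri R) eta1) ->
     is_max_eig (helmholtzian tl hd tri R)
       (if (0 < t)%N then Num.max mu1 (3 + eta1) else mu1)).
Proof.
move=> m0.
have LE : laplacian tl hd R = B1 *m B1^T by apply/matrixP => u v; rewrite B1B1t.
have cnz : forall k (M : 'M[R]_k), char_poly M != 0 by move=> k M; rewrite monic_neq0 ?char_poly_monic.
have F1 : char_poly (B1^T *m B1) * char_poly (B2 *m B2^T) = 'X^m * char_poly (helmholtzian tl hd tri R).
  rewrite helmE; apply: char_poly_mulP.
  by rewrite mulmxA -[B1^T *m B1 *m B2]mulmxA B1B2 mulmx0 mul0mx.
have F2 := @sylvester_char _ _ _ B1^T B1; rewrite -LE in F2.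
have F3 := @sylvester_char _ _ _ B2 B2^T; rewrite B2tB2 char_poly_shift in F3.
have mupE : forall a : R, a != 0 ->
     mup a (char_poly (helmholtzian tl hd tri R)) =
       (mup a (char_poly (laplacian tl hd R)) +
        mup (a - 3) (char_poly (tri_adj_mx tl hd tri R)))%N.
  move=> a a0.
  have mX : forall k (p : {poly R}), p != 0 -> mup a ('X^k * p) = mup a p.
    by move=> k p p0; apply: mupXk.
  rewrite -(mX m _ (cnz _ _)) -F1 mupM ?cnz //.
  rewrite -(mX n (char_poly (B1^T *m B1)) (cnz _ _)) F2 (mX _ _ (cnz _ _)).
  rewrite -(mX t (char_poly (B2 *m B2^T)) (cnz _ _)) F3 (mX _ _).
    by rewrite mup_comp ?cnz.
  by rewrite comp_poly2_eq0 ?size_XsubC ?cnz.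
split => //.
have eigH : forall a : R, a != 0 -> eigenvalue (helmholtzian tl hd tri R) a =
    eigenvalue (laplacian tl hd R) a || eigenvalue (tri_adj_mx tl hd tri R) (a - 3).
  move=> a a0; rewrite !eigenvalue_root_char !root_mup ?cnz // mupE //.
  by rewrite addn_gt0.
have [r [r0 er]] : exists r, 0 < r /\ eigenvalue (laplacian tl hd R) r.
  apply: sym_pos_eig; first by rewrite LE trmx_mul trmxK.
  rewrite LE mxtrace_mulC /mxtrace.
  have -> : \sum_i (B1^T *m B1) i i = \sum_(i < m) (2 : R).
    apply: eq_bigr => e _; rewrite B1tB1 !eqxx [hd e == tl e]eq_sym (negbTE (tlhd e)) /=; lra.
  rewrite sumr_const card_ord; case: m m0 => // k _.
  by rewrite mulrS; apply: ltr_pwDl => //; rewrite mulrn_wge0.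
move=> mu1 eta1 [hL1 hL2] hA.
have mu1p : 0 < mu1 by apply: lt_le_trans r0 (hL2 _ er).
set M := if (0 < t)%N then Num.max mu1 (3 + eta1) else mu1.
have mu1M : mu1 <= M by rewrite /M; case: ifP => // _; rewrite le_max lexx.
split.
  rewrite /M; case: ifP => tp; last by rewrite eigH ?hL1 // gt_eqF.
  have [hA1 hA2] := hA tp.
  rewrite maxEle; case: ifP => h.
    rewrite eigH; last by rewrite gt_eqF // (lt_le_trans mu1p h).
    by rewrite addrC addrK hA1 orbT.
  by rewrite eigH ?hL1 // gt_eqF.
move=> y hy; case: (eqVneq y 0) => [->|y0]; first by apply: le_trans mu1M; apply: ltW.
move: hy; rewrite eigH // => /orP [/hL2 h|h]; first exact: le_trans h mu1M.
case: (posnP t) => [t0|tp].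
  by move: h; rewrite (negbTE (@eig0 _ _ _ (y - 3) t0)).
rewrite /M tp; have [_ hA2] := hA tp; have := hA2 _ h => h2.
by rewrite le_max; apply/orP; right; lra.
Qed.

End Comb.

Theorem theorem5p1 (R : rcfType) (n m t : nat) (tl hd : 'I_m -> 'I_n)
    (tri : 'I_t -> 'I_n * 'I_n * 'I_n) :
  simple_oriented tl hd ->
  oriented_triangles tl hd tri ->
  (0 < m)%N ->
  (forall a : R, a != 0 ->
     mup a (char_poly (helmholtzian tl hd tri R)) =
       (mup a (char_poly (laplacian tl hd R)) +
        mup (a - 3) (char_poly (tri_adj_mx tl hd tri R)))%N) /\
  (forall mu1 eta1 : R,
     is_max_eig (laplacian tl hd R) mu1 ->
     ((0 < t)%N -> is_max_eig (tri_adj_mx tl hd tri R) eta1) ->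
     is_max_eig (helmholtzian tl hd tri R)
       (if (0 < t)%N then Num.max mu1 (3 + eta1) else mu1)).
Proof. by move=> hs ht m0; apply: mainthm. Qed.
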